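(* Let $R$ be a commutative ring with unit, $\mathcal{P}$ a filtered poset, and $F\colon\mathcal{P}\to R\text{-mod}$ a weak Mackey functor with a quasi-unit. Then $F$ is cofibrant, i.e. the natural map $\operatorname{colim}_{\mathcal{P}_{<i}}F\to F(i)$ is injective for every $i\in\mathcal{P}$.
   Context: A filtered poset is a poset with a map $d\colon\mathcal{P}\to\mathbb{N}$ with $d(i)<d(j)$ whenever $i<j$. (Cofibrant refers to the Reedy model structure on $\operatorname{Fun}(\mathcal{P},\operatorname{Ch}(R))$, in which a functor is cofibrant exactly when these natural maps are injective.) $F(j<i)$ is the image of the arrow $j\to i$, $F(i<i)=1$. $\operatorname{Im}_F(j)=\sum_{k<j}\operatorname{Im}F(k<j)$. An endomorphism (automorphism) $\alpha$ of $F(i)$ is $F$-linear if for every $j<i$ there is an endomorphism (automorphism) $\beta$ of $F(j)$ with $\alpha\circ F(j<i)=F(j<i)\circ\beta$; write $\operatorname{End}^F(i)$, $\operatorname{Aut}^F(i)$. $F$ is a weak Mackey functor if for all $j<i$ there is an $R$-linear $G(j<i)\colon F(i)\to F(j)$ with $G(j<i)\circ F(j<i)=\alpha(i,j)\in\operatorname{End}^F(j)$, and for all $k<i$ with $j\not\le k$, $\operatorname{Im}(G(j<i)\circ F(k<i))\subseteq\operatorname{Im}_F(j)$; it has a quasi-unit if each $\alpha(i,j)\in\operatorname{Aut}^F(j)$. *)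

(* Defs.v *)
From HB Require Import structures.
From mathcomp Require Import all_boot all_order all_algebra.

Set Implicit Arguments.
Unset Strict Implicit.
Unset Printing Implicit Defensive.

Import Order.Theory GRing.Theory.

(* A functor F : P -> R-mod is given by a family of R-modules F k and
   R-linear maps Fmap j i : F j -> F i, only meaningful for j <= i
   (functoriality is required only on comparable pairs; the values on
   incomparable pairs are irrelevant junk). *)

Section PosetModules.
Variables (R : comPzRingType) (d : Order.disp_t) (P : porderType d).
Variables (F : P -> lmodType R) (Fmap : forall j i : P, {linear F j -> F i}).

Local Open Scope ring_scope.

Definition is_functor : Prop :=
  (forall i (x : F i), Fmap i i x = x) /\
  (forall k j i (x : F k), (k <= j)%O -> (j <= i)%O ->
      Fmap k i x = Fmap j i (Fmap k j x)).

Definition ImF (j : P) (y : F j) : Prop :=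
  exists s : seq {k : P & F k},
    all (fun p => (tag p < j)%O) s /\
    y = \sum_(p <- s) Fmap (tag p) j (tagged p).

Definition EndF (j : P) (a : F j -> F j) : Prop :=
  linear a /\
  forall l, (l < j)%O -> exists b : {linear F l -> F l},
      forall x : F l, a (Fmap l j x) = Fmap l j (b x).

Definition AutF (j : P) (a : F j -> F j) : Prop :=
  linear a /\ bijective a /\
  forall l, (l < j)%O -> exists b : {linear F l -> F l},
      bijective b /\ forall x : F l, a (Fmap l j x) = Fmap l j (b x).

Definition weak_mackey_quasi_unit : Prop :=
  forall j i : P, (j < i)%O ->
    exists G : {linear F i -> F j},
      AutF (fun x => G (Fmap j i x)) /\
      (forall k, (k < i)%O -> ~~ (j <= k)%O ->
         forall x : F k, ImF (G (Fmap k i x))).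

(* Colimit over P_{<i}: (direct sum of F k, k < i) modulo the submodule
   spanned by the relations  e_k(x) - e_{k'}(F(k<k') x),  k < k' < i.
   Elements of the direct sum are finitely supported dependent functions. *)
Definition relgen (i : P) (g : forall k, F k) : Prop :=
  exists k k' (x : F k),
    [/\ (k < k')%O, (k' < i)%O, g k = x, g k' = - Fmap k k' x
      & forall j, j != k -> j != k' -> g j = 0].

Inductive relspan (i : P) : (forall k, F k) -> Prop :=
  | rs_zero : relspan i (fun k => 0)
  | rs_gen : forall g, relgen i g -> relspan i g
  | rs_add : forall g h, relspan i g -> relspan i h ->
               relspan i (fun k => g k + h k)
  | rs_scale : forall (a : R) g, relspan i g -> relspan i (fun k => a *: g k).

(* The natural map colim_{P_{<i}} F -> F(i) is injective: every finitely
   supported family g with support in P_{<i} that is sent to 0 lies in the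
   relation submodule. *)
Definition colim_map_injective (i : P) : Prop :=
  forall (g : forall k, F k) (s : seq P),
    uniq s -> (forall k, k \in s -> (k < i)%O) ->
    (forall k, k \notin s -> g k = 0) ->
    \sum_(k <- s) Fmap k i (g k) = 0 ->
    relspan i g.

Definition cofibrant : Prop := forall i : P, colim_map_injective i.

End PosetModules.

(* Main.v *)
Require Import Defs.
From HB Require Import structures.
From mathcomp Require Import all_boot all_order all_algebra.
From Stdlib Require Import FunctionalExtensionality.
From mathcomp Require Import zify.

Set Implicit Arguments.
Unset Strict Implicit.
Unset Printing Implicit Defensive.

Import Order.Theory GRing.Theory.

Section Helpers.
Variables (R : comPzRingType) (d : Order.disp_t) (P : porderType d).
Variables (F : P -> lmodType R) (Fmap : forall j i : P, {linear F j -> F i}).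
Local Open Scope ring_scope.

Definition e_ (j : P) (x : F j) : forall m, F m :=
  fun m => match j =P m with ReflectT E => eq_rect j F x m E | ReflectF _ => 0 end.

Lemma e_id j x : e_ x j = x.
Proof. rewrite /e_; case: eqP => // E; by rewrite (eq_irrelevance E erefl). Qed.

Lemma e_ne j x m : j != m -> e_ (j:=j) x m = 0.
Proof. by rewrite /e_; case: eqP. Qed.

Lemma Fmap_e j x m i : Fmap m i (e_ (j:=j) x m) = if j == m then Fmap j i x else 0.
Proof.
case: (eqVneq j m) => [<-|ne]; first by rewrite e_id.
by rewrite e_ne // linear0.
Qed.

Lemma rs_ext i g h : relspan Fmap i g -> (forall m, g m = h m) -> relspan Fmap i h.
Proof. move=> H E; have <- : g = h by apply: functional_extensionality_dep. done. Qed.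

Definition esum (Y : seq {k : P & F k}) : forall m, F m :=
  fun m => \sum_(q <- Y) e_ (tagged q) m.

Definition img i (s : seq P) (g : forall k, F k) := \sum_(m <- s) Fmap m i (g m).

Lemma img_e i s j x : uniq s -> j \in s -> img i s (e_ (j:=j) x) = Fmap j i x.
Proof.
move=> us js; rewrite /img (bigD1_seq j) //= e_id big1 ?addr0 // => m mj.
by rewrite Fmap_e eq_sym (negbTE mj).
Qed.

Lemma img_add i s g h : img i s (fun m => g m + h m) = img i s g + img i s h.
Proof. by rewrite /img -big_split /=; apply: eq_bigr => m _; rewrite linearD. Qed.

Lemma img_opp i s g : img i s (fun m => - g m) = - img i s g.
Proof. by rewrite /img -sumrN; apply: eq_bigr => m _; rewrite linearN. Qed.

Lemma img_esum i s Y : uniq s -> (forall q, q \in Y -> tag q \in s) ->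
  img i s (esum Y) = \sum_(q <- Y) Fmap (tag q) i (tagged q).
Proof.
move=> us HY; rewrite /img /esum.
under eq_bigr do rewrite linear_sum.
rewrite exchange_big /=; apply: eq_big_seq => q qY.
by rewrite -(@img_e i s (tag q) (tagged q) us (HY q qY)).
Qed.

Lemma img_cat i s t g : img i (s ++ t) g = img i s g + img i t g.
Proof. by rewrite /img big_cat. Qed.

Lemma img_zero i s g : (forall m, m \in s -> g m = 0) -> img i s g = 0.
Proof. by move=> H; rewrite /img big1_seq // => m /andP[_ /H ->]; rewrite linear0. Qed.

Lemma esum_out Y m : m \notin map tag Y -> esum Y m = 0.
Proof.
move=> H; rewrite /esum big1_seq // => q /andP[_ qY]; apply: e_ne.
by apply: contraNneq H => <-; apply: map_f.
Qed.

Lemma ImF0 j : ImF Fmap (j:=j) 0.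
Proof. by exists [::]; rewrite big_nil. Qed.

Lemma ImFD j x y : ImF Fmap (j:=j) x -> ImF Fmap y -> ImF Fmap (x + y).
Proof.
move=> [s [hs ->]] [t [ht ->]]; exists (s ++ t); rewrite all_cat hs ht big_cat; split=> //.
Qed.

Lemma ImFN j x : ImF Fmap (j:=j) x -> ImF Fmap (- x).
Proof.
move=> [s [hs ->]]; exists (map (fun q : {k : P & F k} => Tagged F (- tagged q)) s); split.
  by rewrite all_map.
by rewrite big_map -sumrN; apply: eq_bigr => q _ /=; rewrite linearN.
Qed.

Lemma ImF_sum j (I : eqType) (r : seq I) (Pr : pred I) (h : I -> F j) :
  (forall q, q \in r -> Pr q -> ImF Fmap (h q)) -> ImF Fmap (\sum_(q <- r | Pr q) h q).
Proof.
elim: r => [|a r IH] H; first by rewrite big_nil; apply: ImF0.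
rewrite big_cons; case: ifP => Pa.
  apply: ImFD; first by apply: H; rewrite ?mem_head.
  by apply: IH => q qr; apply: H; rewrite in_cons qr orbT.
by apply: IH => q qr; apply: H; rewrite in_cons qr orbT.
Qed.

Lemma linear_add (V : lmodType R) (a : V -> V) : linear a -> forall x y, a (x + y) = a x + a y.
Proof. by move=> la x y; have := la 1 x y; rewrite !scale1r. Qed.

Lemma linear_zero (V : lmodType R) (a : V -> V) : linear a -> a 0 = 0.
Proof. by move=> la; apply: (addrI (a 0)); rewrite -linear_add // !addr0. Qed.

Lemma pullback j (a : F j -> F j) : AutF Fmap a ->
  forall Y0 : seq {k : P & F k}, all (fun p => (tag p < j)%O) Y0 ->
  exists Y : seq {k : P & F k}, all (fun p => (tag p < j)%O) Y /\
    \sum_(q <- Y0) Fmap (tag q) j (tagged q) = a (\sum_(q <- Y) Fmap (tag q) j (tagged q)).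
Proof.
move=> [la [_ Hb]]; elim=> [|q Y0 IH] /=.
  by move=> _; exists [::]; rewrite !big_nil linear_zero.
move=> /andP[lq /IH [Y [hY eY]]].
have [b [[binv _ bK] Eb]] := Hb _ lq.
exists (Tagged F (binv (tagged q)) :: Y); split; first by rewrite /= lq.
by rewrite !big_cons linear_add // eY Eb /= bK.
Qed.

Lemma count_split (T : Type) (a b : pred T) s :
  (count (fun x => a x && b x) s + count (fun x => a x && ~~ b x) s = count a s)%N.
Proof. elim: s => //= x s IH; rewrite -IH; case: (a x); case: (b x) => /=; lia. Qed.


Variables (deg : P -> nat) (Hdeg : forall i j : P, (i < j)%O -> (deg i < deg j)%N).
Variables (HF : is_functor Fmap) (HM : weak_mackey_quasi_unit Fmap) (i : P).

Lemma top_in_Im g s j : uniq s -> (forall m, m \in s -> (m < i)%O) -> img i s g = 0 ->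
  j \in s -> (forall m, m \in s -> g m != 0 -> (j <= m)%O -> m = j) ->
  exists Y : seq {k : P & F k}, all (fun p => (tag p < j)%O) Y /\
    g j = \sum_(q <- Y) Fmap (tag q) j (tagged q).
Proof.
move=> us Hs Himg js Htop.
have ji := Hs j js; have [G [Aut HIm]] := HM ji.
have H0 : G (img i s g) = 0 by rewrite Himg linear0.
move: H0; rewrite /img (bigD1_seq j) //= linearD linear_sum => /eqP; rewrite addr_eq0 => /eqP E.
have ImA : ImF Fmap (G (Fmap j i (g j))).
  rewrite E; apply: ImFN; apply: ImF_sum => m ms mj.
  case: (eqVneq (g m) 0) => [->|gm]; first by rewrite !linear0; apply: ImF0.
  apply: HIm; first exact: Hs.
  apply/negP => jm; by rewrite (Htop m ms gm jm) eqxx in mj.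
have [Y0 [hY0 eY0]] := ImA.
have [Y [hY eY]] := pullback Aut hY0.
exists Y; split => //.
case: Aut => la [[ainv aK _] _]; apply: (can_inj aK).
by rewrite -eY -eY0.
Qed.

Lemma e_sum (I : Type) (Y : seq I) j (h : I -> F j) m :
  \sum_(q <- Y) e_ (h q) m = e_ (\sum_(q <- Y) h q) m.
Proof.
case: (eqVneq j m) => [<-|ne]; first by rewrite e_id; apply: eq_bigr => q _; rewrite e_id.
by rewrite e_ne // big1 // => q _; rewrite e_ne.
Qed.

Lemma rs_sum (I : eqType) (Y : seq I) (r : I -> forall k, F k) :
  (forall q, q \in Y -> relspan Fmap i (r q)) -> relspan Fmap i (fun m => \sum_(q <- Y) r q m).
Proof.
elim: Y => [|q Y IH] H.
  by apply: rs_ext; first exact: rs_zero; move=> m; rewrite big_nil.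
apply: rs_ext; first apply: rs_add; first (apply: H; exact: mem_head).
  by apply: IH => x xY; apply: H; rewrite in_cons xY orbT.
by move=> m /=; rewrite big_cons.
Qed.

Definition cnt (D : nat) (g : forall k, F k) (s : seq P) := count (fun m => (deg m == D) && (g m != 0)) s.

Lemma main D : forall g s, uniq s -> (forall m, m \in s -> (m < i)%O) ->
  (forall m, m \notin s -> g m = 0) -> (forall m, m \in s -> g m != 0 -> (deg m < D)%N) ->
  img i s g = 0 -> relspan Fmap i g.
Proof.
elim: D => [|D IHD] g s us Hs Hout Hdg Himg.
  apply: rs_ext; first exact: rs_zero.
  move=> m /=; case: (boolP (m \in s)) => ms; last by rewrite Hout.
  by apply/esym/eqP; apply: contraT => /(Hdg m ms).
have low : forall g s, uniq s -> (forall m, m \in s -> (m < i)%O) ->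
  (forall m, m \notin s -> g m = 0) -> (forall m, m \in s -> g m != 0 -> (deg m < D.+1)%N) ->
  img i s g = 0 -> cnt D g s = 0%N -> relspan Fmap i g.
  move=> g1 s1 us1 Hs1 Hout1 Hdg1 Himg1 c0.
  apply: (IHD g1 s1) => // m ms gm.
  have := Hdg1 m ms gm; rewrite ltnS leq_eqVlt => /orP[/eqP dm|//].
  have : has (fun m => (deg m == D) && (g1 m != 0)) s1.
    by apply/hasP; exists m => //; rewrite dm eqxx gm.
  by rewrite has_count -/(cnt D g1 s1) c0.
suff : forall n g s, uniq s -> (forall m, m \in s -> (m < i)%O) ->
  (forall m, m \notin s -> g m = 0) -> (forall m, m \in s -> g m != 0 -> (deg m < D.+1)%N) ->
  img i s g = 0 -> (cnt D g s <= n)%N -> relspan Fmap i g.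
  by move=> /(_ _ g s us Hs Hout Hdg Himg (leqnn _)).
clear g s us Hs Hout Hdg Himg.
elim=> [|n IHn] g s us Hs Hout Hdg Himg Hc.
  by apply: (low g s) => //; apply/eqP; rewrite -leqn0.
case: (posnP (cnt D g s)) => [c0|cpos]; first exact: (low g s).
have /hasP [j js /andP[/eqP dj gj]] : has (fun m => (deg m == D) && (g m != 0)) s.
  by rewrite has_count.
have top : forall m, m \in s -> g m != 0 -> (j <= m)%O -> m = j.
  move=> m ms gm jm; apply/eqP; apply: contraT => mj.
  have jm' : (j < m)%O by rewrite lt_neqAle jm andbT ?mj // eq_sym.
  have := Hdeg jm'; have := Hdg m ms gm; rewrite dj; lia.
have [Y [hY eY]] := top_in_Im us Hs Himg js top.
pose g' := fun m => g m - e_ (g j) m + esum Y m.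
pose s' := s ++ [seq m <- undup (map tag Y) | m \notin s].
have tagY : forall m, m \in map tag Y -> (m < j)%O.
  by move=> m /mapP [q qY ->]; exact: (allP hY q qY).
have g'0 : forall m, g m = 0 -> m != j -> m \notin map tag Y -> g' m = 0.
  by move=> m gm mj mY; rewrite /g' gm e_ne 1?eq_sym // esum_out // subrr addr0.
have g'j : g' j = 0.
  rewrite /g' e_id esum_out ?subrr ?addr0 //.
  by apply/negP => /tagY; rewrite ltxx.
have ins' : forall m, (m \in s') = (m \in s) || (m \in map tag Y).
  by move=> m; rewrite mem_cat mem_filter mem_undup; case: (m \in s).
have us' : uniq s'.
  rewrite cat_uniq us filter_uniq ?undup_uniq // andbT /=.
  by apply/hasPn => m; rewrite mem_filter => /andP[].
have Hg' : relspan Fmap i g'.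
  apply: (IHn g' s' us').
  - move=> m; rewrite ins' => /orP[/Hs //| /tagY mj]; exact: lt_trans mj (Hs j js).
  - move=> m; rewrite ins' negb_or => /andP[ms mY]; apply: g'0 => //; first exact: Hout.
    by apply: contraNneq ms => ->.
  - move=> m ms' g'm; case: (eqVneq m j) => [->|mj]; first by rewrite dj.
    case: (boolP (m \in map tag Y)) => mY.
      by have := Hdeg (tagY m mY); rewrite dj; lia.
    have gm : g m != 0 by apply: contra g'm => /eqP gm; rewrite g'0.
    have ms : m \in s by apply: contraT => /Hout /eqP; rewrite (negbTE gm).
    exact: Hdg.
  - rewrite /g' (img_add i s' (fun m => g m - e_ (g j) m) (esum Y)).
    rewrite (img_add i s' g (fun m => - e_ (g j) m)) img_opp img_e //; last by rewrite ins' js.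
    rewrite img_esum //; last by move=> q qY; rewrite ins' map_f ?orbT.
    rewrite img_cat Himg (@img_zero i [seq m <- undup (map tag Y) | m \notin s] g); last first.
      by move=> m; rewrite mem_filter => /andP[ms _]; apply: Hout.
    rewrite eY linear_sum !add0r addrC; apply/eqP; rewrite subr_eq0; apply/eqP.
    apply: eq_big_seq => q qY.
    have qj := allP hY q qY.
    by rewrite (proj2 HF _ _ _ _ (ltW qj) (ltW (Hs j js))).
  - rewrite /cnt count_cat.
    have -> : count (fun m => (deg m == D) && (g' m != 0)) [seq m <- undup (map tag Y) | m \notin s] = 0%N.
      apply/eqP; rewrite eqn0Ngt -has_count; apply/hasPn => m.
      rewrite mem_filter mem_undup => /andP[_ /tagY /Hdeg]; rewrite dj => lt.
      by apply/negP => /andP[/eqP dm _]; rewrite dm ltnn in lt.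
    rewrite addn0.
    have sub : (count (fun m => (deg m == D) && (g' m != 0%R)) s <=
                count (fun m => ((deg m == D) && (g m != 0%R)) && (m != j)) s)%N.
      apply: sub_count => m /andP[/eqP dm g'm].
      have mj : m != j by apply: contra g'm => /eqP ->; rewrite g'j.
      have mY : m \notin map tag Y by apply/negP => /tagY /Hdeg; rewrite dj dm ltnn.
      have gm : g m != 0 by apply: contra g'm => /eqP gm; rewrite g'0.
      by rewrite dm eqxx gm mj.
    have Ecs := count_split (fun m => (deg m == D) && (g m != 0)) (fun m => m != j) s.
    have pos : (0 < count (fun m => ((deg m == D) && (g m != 0%R)) && ~~ (m != j)) s)%N.
      by rewrite -has_count; apply/hasP; exists j => //; rewrite dj eqxx gj eqxx.
    move: Hc; rewrite /cnt -Ecs => Hc; apply: leq_trans sub _; rewrite -ltnS (leq_trans _ Hc) //; lia.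
pose r := fun (q : {k : P & F k}) m => e_ (tagged q) m - e_ (Fmap (tag q) j (tagged q)) m.
have Hr : relspan Fmap i (fun m => \sum_(q <- Y) r q m).
  apply: rs_sum => q qY; apply: rs_gen.
  have qj := allP hY q qY.
  have ne : tag q != j by apply/negP => /eqP E; rewrite E ltxx in qj.
  exists (tag q), j, (tagged q); split => //.
  - exact: Hs.
  - by rewrite /r e_id e_ne 1?eq_sym // subr0.
  - by rewrite /r e_id e_ne // sub0r.
  - by move=> m m1 m2; rewrite /r !e_ne 1?eq_sym // subr0.
apply: rs_ext; first exact: (rs_add Hg' (rs_scale (-1) Hr)).
move=> m /=; rewrite scaleN1r /r sumrB (e_sum Y (fun q => Fmap (tag q) j (tagged q))) -eY.
by rewrite /g' /esum opprB addrACA subrK subrr addr0.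
Qed.

End Helpers.


Theorem lemma3p4 (R : comPzRingType) (d : Order.disp_t) (P : porderType d)
  (deg : P -> nat) (Hdeg : forall i j : P, (i < j)%O -> (deg i < deg j)%N)
  (F : P -> lmodType R) (Fmap : forall j i : P, {linear F j -> F i})
  (HF : is_functor Fmap) (HM : weak_mackey_quasi_unit Fmap) :
  cofibrant Fmap.
Proof.
move=> i g s us Hs Hout Himg.
apply: (@main R d P F Fmap deg Hdeg HF HM i (\max_(m <- s) deg m).+1 g s) => //.
by move=> m ms _; rewrite ltnS; apply: leq_bigmax_seq.
Qed.
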